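(* Let $q:\chi\to[0,\infty)$ be a risk metric that is normalized and additive. A risk-sharing rule $\boldsymbol{C}$ on $\chi^n$ is the $q$-proportional RS rule if and only if it has strongly aggregate contribution-over-$q$ ratios.
   Context: Fix a probability space $(\Omega,\mathcal{F},\mathbb{P})$ and an integer $n\ge 1$. Let $\chi$ be a convex cone of non-negative random variables on this space (closed under addition and under multiplication by positive scalars) with $0\in\chi$. All equalities between random variables are understood almost surely. A pool is a vector $\boldsymbol{X}=(X_1,\ldots,X_n)\in\chi^n$, with aggregate loss $S_{\boldsymbol{X}}=\sum_{i=1}^n X_i$. A risk-sharing (RS) rule is a mapping $\boldsymbol{C}$ assigning to every pool $\boldsymbol{X}\in\chi^n$ a vector $\boldsymbol{C}[\boldsymbol{X}]=(C_1[\boldsymbol{X}],\ldots,C_n[\boldsymbol{X}])$ of real-valued random variables satisfying $\sum_{i=1}^n C_i[\boldsymbol{X}]=S_{\boldsymbol{X}}$. A risk metric $q:\chi\to[0,\infty)$ is normalized if $q[0]=0$ and additive if $q\left[\sum_{k=1}^n X_k\right]=\sum_{k=1}^n q[X_k]$ for every $\boldsymbol{X}\in\chi^n$. The $q$-proportional RS rule is specified only on pools with $q[X_j]>0$ for at least one $j$, where it is given by $C_i[\boldsymbol{X}]=\frac{q[X_i]}{\sum_{k=1}^n q[X_k]}S_{\boldsymbol{X}}$ for $i=1,\ldots,n$; a rule ''is the $q$-proportional RS rule'' if its contributions equal these on every such pool. The rule $\boldsymbol{C}$ has strongly aggregate contribution-over-$q$ ratios if there exists a function $\mathbf{h}=(h_1,\ldots,h_n):\mathbb{R}^2\to\mathbb{R}^n$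 (the same for all pools) such that for every pool $\boldsymbol{X}$ with $q[X_j]>0$ for at least one $j$, $C_i[\boldsymbol{X}]=q[X_i]\,h_i\big(S_{\boldsymbol{X}},q[S_{\boldsymbol{X}}]\big)$ for all $i=1,\ldots,n$. *)

(* Defs.v *)
From HB Require Import structures.
From mathcomp Require Import all_boot all_order all_algebra.
From mathcomp Require Import all_classical all_reals all_analysis.
Set Implicit Arguments. Unset Strict Implicit. Unset Printing Implicit Defensive.
Import Order.TTheory GRing.Theory Num.Theory.
Local Open Scope classical_set_scope.
Local Open Scope ring_scope.

Section RiskSharing.
Context {d : measure_display} {Omega : measurableType d} {R : realType}.

Definition is_cone (chi : set (Omega -> R)) : Prop :=
  chi (fun _ => 0) /\
  (forall X Y, chi X -> chi Y -> chi (fun w => X w + Y w)) /\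
  (forall (c : R) X, 0 < c -> chi X -> chi (fun w => c * X w)).

Definition nonneg_rvs (chi : set (Omega -> R)) : Prop :=
  forall X, chi X -> measurable_fun setT X /\ (forall w, 0 <= X w).

Definition is_pool (n : nat) (chi : set (Omega -> R)) (X : 'I_n -> Omega -> R) : Prop :=
  forall i, chi (X i).

Definition aggS (n : nat) (X : 'I_n -> Omega -> R) : Omega -> R :=
  fun w => \sum_(i < n) X i w.

Definition normalized (q : (Omega -> R) -> R) : Prop := q (fun _ => 0) = 0.

Definition additive_metric (n : nat) (chi : set (Omega -> R)) (q : (Omega -> R) -> R) : Prop :=
  forall X : 'I_n -> Omega -> R, is_pool chi X -> q (aggS X) = \sum_(k < n) q (X k).

Definition is_RS_rule (P : probability Omega R) (n : nat) (chi : set (Omega -> R))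
  (C : ('I_n -> Omega -> R) -> 'I_n -> Omega -> R) : Prop :=
  forall X, is_pool chi X ->
    (forall i, measurable_fun setT (C X i)) /\
    {ae P, forall w, \sum_(i < n) C X i w = aggS X w}.

Definition is_q_proportional (P : probability Omega R) (n : nat) (chi : set (Omega -> R))
  (q : (Omega -> R) -> R) (C : ('I_n -> Omega -> R) -> 'I_n -> Omega -> R) : Prop :=
  forall X, is_pool chi X -> (exists j, 0 < q (X j)) ->
    forall i, {ae P, forall w,
      C X i w = q (X i) / (\sum_(k < n) q (X k)) * aggS X w}.

(* h : R^2 -> R^n, curried *)
Definition strongly_aggregate_ratios (P : probability Omega R) (n : nat)
  (chi : set (Omega -> R)) (q : (Omega -> R) -> R)
  (C : ('I_n -> Omega -> R) -> 'I_n -> Omega -> R) : Prop :=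
  exists h : R -> R -> 'I_n -> R,
    forall X, is_pool chi X -> (exists j, 0 < q (X j)) ->
      forall i, {ae P, forall w,
        C X i w = q (X i) * h (aggS X w) (q (aggS X)) i}.

End RiskSharing.

(* Main.v *)
Require Import Defs.
From HB Require Import structures.
From mathcomp Require Import all_boot all_order all_algebra.
From mathcomp Require Import all_classical all_reals all_analysis.
Import Order.TTheory GRing.Theory Num.Theory.
Local Open Scope classical_set_scope.
Local Open Scope ring_scope.

Theorem theorem4 (d : measure_display) (Omega : measurableType d) (R : realType)
  (P : probability Omega R) (n : nat) (chi : set (Omega -> R))
  (q : (Omega -> R) -> R) (C : ('I_n -> Omega -> R) -> 'I_n -> Omega -> R) :
  (0 < n)%N ->
  is_cone chi -> nonneg_rvs chi ->
  (forall X, chi X -> 0 <= q X) ->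
  normalized q -> additive_metric n chi q ->
  is_RS_rule P chi C ->
  (is_q_proportional P chi q C <-> strongly_aggregate_ratios P chi q C).
Proof.
move=> n0 [chi0 [chiD chiZ]] _ qge0 qn qadd RS.
split.
- move=> Hp; exists (fun s t _ => s / t) => X pX jp i.
  apply: filterS (Hp X pX jp i) => w ->.
  by rewrite (qadd X pX) mulrA mulrAC.
- move=> [h Hh] X pX [j qj] i.
  set S := aggS X.
  have chiS : chi S.
    have : forall s : seq 'I_n, chi (fun w => \sum_(k <- s) X k w).
      elim=> [|k s IH].
        by have -> : (fun w => \sum_(k <- [::]) X k w) = (fun _ => 0) 
          by apply: funext => w; rewrite big_nil.
      have -> : (fun w => \sum_(k0 <- k :: s) X k0 w) =
                (fun w => X k w + \sum_(k0 <- s) X k0 w)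
        by apply: funext => w; rewrite big_cons.
      exact: chiD.
    move=> /(_ (index_enum 'I_n)) H; exact: H.
  have qSE : q S = \sum_(k < n) q (X k) by exact: qadd.
  have qSpos : 0 < q S.
    rewrite qSE (bigD1 j) //=; apply: (lt_le_trans qj).
    rewrite lerDl; apply: sumr_ge0 => k _; exact: qge0.
  pose Y : 'I_n -> Omega -> R := fun k => if k == i then S else (fun _ => 0).
  have pY : is_pool chi Y by move=> k; rewrite /Y; case: (k == i).
  have aggY : aggS Y = S.
    apply: funext => w; rewrite /aggS (bigD1 i) //= /Y eqxx big1 ?addr0 //.
    by move=> k /negbTE ->.
  have qY : exists k, 0 < q (Y k) by exists i; rewrite /Y eqxx.
  have HY := filter_forall (ae_filter_ringOfSetsType P) (fun k => Hh Y pY qY k).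
  have [_ RSY] := RS Y pY.
  have Hi : {ae P, forall w, h (S w) (q S) i = S w / q S}.
    apply: filterS (filterI HY RSY) => w [HYw RSw].
    move: RSw; rewrite aggY (bigD1 i) //= big1; last first.
      by move=> k /negbTE kn; rewrite HYw /Y kn qn mul0r.
    rewrite addr0 HYw /Y eqxx aggY => E.
    by rewrite -[in RHS]E mulrC mulKf // gt_eqF.
  apply: filterS (filterI Hi (Hh X pX (ex_intro _ j qj) i)) => w [Hw ->].
  rewrite -/S Hw -qSE.
  by rewrite mulrA mulrAC.
Qed.
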